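(* For a combinatorial auction with $m\ge2$ items and $n\ge2$ bidders with unit-demand valuations, there is no randomized mechanism that is universally obviously strategy-proof, satisfies individual rationality and no negative transfers, and gives an approximation better than $\frac{8}{7}$ to the optimal social welfare; i.e., every such mechanism has $\sup_v\mathrm{OPT}(v)/\mathbb{E}[W(v)]\ge 8/7$.
   Context: A valuation is unit-demand if there are $v_{ij}\ge0$ with $v_i(A)=\max_{j\in A}v_{ij}$. Each bidder's domain $V_i$ is the set of unit-demand valuations (publicly known), valuations private, utilities quasi-linear. A deterministic mechanism is a rooted tree: each internal node is assigned to one bidder, who sends one of the messages labeling the outgoing edges; each leaf is labeled with a feasible allocation (disjoint bundles) and a payment for each bidder. A behavior $B_i$ specifies a message at every node of bidder $i$; a profile $B$ determines a root-to-leaf path $\mathrm{Path}(B)$ with bundle $f_i(B)$ and payment $p_i(B)$ for $i$. A strategy $\mathcal S_i$ maps each $v_i\in V_i$ to a behavior; it is obviously dominant if for every $v_i\in V_i$, every node $u$ of $i$, every $B_{-i}$ and every profile $B'$ with $u\in\mathrm{Path}(\mathcal S_i(v_i),B_{-i})\cap\mathrm{Path}(B')$ and $B'_i$ sending at $u$ a message different from $\mathcal S_i(v_i)$'s, $v_i(f_i(\mathcal S_i(v_i),B_{-i}))-p_i(\mathcal S_i(v_i),B_{-i})\ge v_i(f_i(B'))-p_i(B')$. A randomized mechanism is a probability distribution over deterministic mechanisms each with strategies; it is universally OSP if every mechanism in its support is OSP. Individual rationality: in every mechanism of the support, for every profile in $\prod_iV_i$, following the strategies gives each bidder utility $\ge0$.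 No negative transfers: every payment at every leaf of every mechanism in the support is $\ge0$. $\mathbb{E}[W(v)]$ is the expected welfare when bidders follow their strategies on profile $v$; $\mathrm{OPT}(v)$ is the optimal welfare. *)

(* Defs.v *)
From HB Require Import structures.
From mathcomp Require Import all_boot all_order all_algebra.
From mathcomp Require Import all_classical all_reals all_analysis.

Set Implicit Arguments.
Unset Strict Implicit.
Unset Printing Implicit Defensive.

Import Order.TTheory GRing.Theory Num.Theory.
Local Open Scope ring_scope.

Section Auction.
Variables (R : realType) (n m : nat).

Definition valuation := 'I_m -> R.

(* unit-demand: nonnegative item values; the bundle value is the max. *)
Definition unit_demand (v : valuation) : Prop := forall j, 0 <= v j.

Definition vbundle (v : valuation) (A : {set 'I_m}) : R :=
  \big[Num.max/0]_(j in A) v j.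

Definition allocation := 'I_n -> {set 'I_m}.

Definition feasible (a : allocation) : bool :=
  [forall i : 'I_n, [forall i' : 'I_n, (i != i') ==> [disjoint a i & a i']]].

Inductive mech : Type :=
  | Leaf (a : allocation) (p : 'I_n -> R)
  | Node (owner : 'I_n) (M : Type) (next : M -> mech).

(* A behavior: a message at every internal node of the tree (the messages
   at nodes not owned by the bidder are never used). *)
Fixpoint beh (t : mech) : Type :=
  match t with
  | Leaf _ _ => unit
  | Node _ M k => (M * (forall x : M, beh (k x)))%type
  end.

Definition profile (t : mech) := 'I_n -> beh t.

Fixpoint outcome (t : mech) : profile t -> allocation * ('I_n -> R) :=
  match t return profile t -> allocation * ('I_n -> R) with
  | Leaf a p => fun _ => (a, p)
  | Node j M k => fun B => let x := (B j).1 in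
                  @outcome (k x) (fun i => (B i).2 x)
  end.

(* Positions (nodes) of the tree: None = the root, Some (x, u) = the node u
   of the subtree reached through edge x. *)
Fixpoint pos (t : mech) : Type :=
  match t with
  | Leaf _ _ => unit
  | Node _ M k => option {x : M & pos (k x)}
  end.

Fixpoint owner_at (t : mech) : pos t -> option 'I_n :=
  match t return pos t -> option 'I_n with
  | Leaf _ _ => fun _ => None
  | Node j M k => fun u =>
      match u with
      | None => Some j
      | Some (existT x u') => owner_at u'
      end
  end.

Fixpoint on_path (t : mech) : profile t -> pos t -> Prop :=
  match t return profile t -> pos t -> Prop with
  | Leaf _ _ => fun _ _ => True
  | Node j M k => fun B u =>
      match u with
      | None => True
      | Some (existT x u') =>
          (B j).1 = x /\ on_path (fun i => (B i).2 x) u'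
      end
  end.

Fixpoint differ_at (t : mech) : beh t -> beh t -> pos t -> Prop :=
  match t return beh t -> beh t -> pos t -> Prop with
  | Leaf _ _ => fun _ _ _ => False
  | Node j M k => fun b b' u =>
      match u with
      | None => b.1 <> b'.1
      | Some (existT x u') => differ_at (b.2 x) (b'.2 x) u'
      end
  end.

Fixpoint all_leaves (P : allocation -> ('I_n -> R) -> Prop) (t : mech) : Prop :=
  match t with
  | Leaf a p => P a p
  | Node _ M k => forall x : M, all_leaves P (k x)
  end.

Record dmech := DMech {
  tree : mech;
  strat : 'I_n -> valuation -> beh tree }.

Definition upd (t : mech) (B : profile t) (i : 'I_n) (b : beh t) : profile t :=
  fun j => if j == i then b else B j.

Definition utility (v : valuation) (o : allocation * ('I_n -> R)) (i : 'I_n) : R :=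
  vbundle v (o.1 i) - o.2 i.

Definition play (D : dmech) (v : 'I_n -> valuation) :=
  outcome (fun i => strat D i (v i)).

Definition feasible_leaves (D : dmech) : Prop :=
  all_leaves (fun a _ => feasible a) (tree D).

Definition OSP (D : dmech) : Prop :=
  forall (i : 'I_n) (vi : valuation), unit_demand vi ->
  forall (u : pos (tree D)), owner_at u = Some i ->
  forall (B B' : profile (tree D)),
    on_path (upd B i (strat D i vi)) u ->
    on_path B' u ->
    differ_at (strat D i vi) (B' i) u ->
    utility vi (outcome B') i <= utility vi (outcome (upd B i (strat D i vi))) i.

Definition indiv_rational (D : dmech) : Prop :=
  forall v : 'I_n -> valuation, (forall i, unit_demand (v i)) ->
  forall i, 0 <= utility (v i) (play D v) i.

Definition no_negative_transfers (D : dmech) : Prop :=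
  all_leaves (fun _ p => forall i, 0 <= p i) (tree D).

Definition welfare (D : dmech) (v : 'I_n -> valuation) : R :=
  \sum_i vbundle (v i) ((play D v).1 i).

Definition OPT (v : 'I_n -> valuation) : R :=
  \big[Num.max/0]_(a : {ffun 'I_n -> {set 'I_m}} | feasible a)
     \sum_i vbundle (v i) (a i).

End Auction.

(* A randomized mechanism: a random variable D : Omega -> dmech on a
   probability space; universally OSP / IR / NNT = every realization is. *)
Definition rand_mech_ok (R : realType) (n m : nat) (d : measure_display)
  (Omega : measurableType d) (D : Omega -> dmech R n m) : Prop :=
  (forall w, feasible_leaves (D w)) /\
  (forall w, OSP (D w)) /\
  (forall w, indiv_rational (D w)) /\
  (forall w, no_negative_transfers (D w)) /\
  (forall v, measurable_fun [set: Omega] (fun w => welfare (D w) v)).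

Definition expected_welfare (R : realType) (n m : nat) (d : measure_display)
  (Omega : measurableType d) (P : probability Omega R)
  (D : Omega -> dmech R n m) (v : 'I_n -> valuation R m) : \bar R :=
  (\int[P]_w (welfare (D w) v)%:E)%E.

(* Main.v *)
Require Import Defs.
From HB Require Import structures.
From mathcomp Require Import all_boot all_order all_algebra.
From mathcomp Require Import all_classical all_reals all_analysis.
Import Order.TTheory GRing.Theory Num.Theory.
From Stdlib Require Import Classical.
From mathcomp Require Import zify ring lra.
Local Open Scope ring_scope.
Set Implicit Arguments.
Unset Strict Implicit.
Unset Printing Implicit Defensive.

Section VB.
Variables (R : realType) (m : nat).
Implicit Types (v : valuation R m) (A : {set 'I_m}).

Lemma vb_ge v A j : j \in A -> v j <= vbundle v A.
Proof. by move=> jA; rewrite /vbundle (bigD1 j) //= le_max lexx. Qed.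

Lemma vb_le v A c : 0 <= c -> (forall j, j \in A -> v j <= c) -> vbundle v A <= c.
Proof.
move=> c0 H; rewrite /vbundle; elim/big_ind: _ => //.
  by move=> x y hx hy; rewrite ge_max hx hy.
Qed.

Lemma vb_ge0 v A : (forall j, 0 <= v j) -> 0 <= vbundle v A.
Proof. by move=> H; rewrite /vbundle; elim/big_ind: _ => // x y hx hy; rewrite le_max hx. Qed.

Lemma vb_set1 v j : 0 <= v j -> vbundle v [set j] = v j.
Proof.
move=> h; rewrite /vbundle (big_pred1_id _ _ _ (i:=j)); first by apply/max_idPl.
by move=> x; rewrite finset.in_set1.
Qed.
End VB.

Lemma all_leaves_outcome (R : realType) n m (Pr : allocation n m -> ('I_n -> R) -> Prop)
  (t : mech R n m) : all_leaves Pr t -> forall B : profile t, Pr (outcome B).1 (outcome B).2.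
Proof.
induction t as [a p|j Mt k IH] => //= H B.
exact: IH.
Qed.

Section Tree.
Variables (R : realType) (n m : nat).

Definition bigr (M M' : nat) : bool := (3 * M.+1 < 2 * M'.+1)%N.

Lemma outcome_node j (Mt : Type) (k : Mt -> mech R n m)
  (B : profile (Node j k)) x :
  (B j).1 = x -> outcome B = outcome (fun i => (B i).2 x).
Proof. by move=> e /=; rewrite e. Qed.

Lemma tree_lemma (t : mech R n m) (i1 i2 : 'I_n) (I : nat -> Prop)
  (PP QQ : nat -> profile t) :
  i1 != i2 ->
  (forall N, exists M, I M /\ (N < M)%N) ->
  (forall M, I M -> outcome (PP M) <> outcome (QQ M)) ->
  (forall i, i != i1 -> i != i2 -> forall M M', PP M i = PP M' i /\ QQ M i = PP M' i) ->
  (forall M M', I M -> I M' -> bigr M M' -> forall u : pos t, owner_at u = Some i1 ->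
     on_path (PP M) u -> on_path (QQ M') u -> ~ differ_at (QQ M' i1) (PP M i1) u) ->
  (forall M M', I M -> I M' -> bigr M M' -> forall u : pos t, owner_at u = Some i2 ->
     on_path (PP M') u -> on_path (QQ M) u -> ~ differ_at (PP M' i2) (QQ M i2) u) ->
  False.
Proof.
move=> ni12; revert I PP QQ; induction t as [a p|j Mt k IH] => I PP QQ Hunb Hleaf Hoth H1 H2.
  by have [M [IM _]] := Hunb 0%N; exact: (Hleaf M IM).
have [x Hunb'] : exists x, (forall N, exists M, (I M /\ (PP M j).1 = x /\ (QQ M j).1 = x) /\ (N < M)%N).
  have [M0 [IM0 _]] := Hunb 0%N.
  have nd : forall (X : Type) (a b : X), ~ (a <> b) -> a = b by move=> X a b; apply: NNPP.
  case: (eqVneq j i1) => [ej|nj1].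
    subst j.
    have E1 : forall M M', I M -> I M' -> bigr M M' -> (QQ M' i1).1 = (PP M i1).1.
      by move=> M M' IM IM' b; apply: nd; exact: (H1 M M' IM IM' b None erefl Logic.I Logic.I).
    exists (PP M0 i1).1 => N.
    have [M [IM ltM]] := Hunb (maxn N (3 * M0.+1)).
    exists M; split; last by move: ltM; rewrite gtn_max => /andP[].
    have bM : bigr M0 M by rewrite /bigr; move: ltM; rewrite gtn_max => /andP[_]; lia.
    have [M2 [IM2 ltM2]] := Hunb (3 * M.+1).
    have b2 : bigr M M2 by rewrite /bigr; lia.
    have b02 : bigr M0 M2 by move: bM; rewrite /bigr; lia.
    split=> //; split; last by rewrite (E1 M0 M).
    by rewrite -(E1 M M2) // (E1 M0 M2).
  case: (eqVneq j i2) => [ej|nj2].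
    subst j.
    have E2 : forall M M', I M -> I M' -> bigr M M' -> (PP M' i2).1 = (QQ M i2).1.
      by move=> M M' IM IM' b; apply: nd; exact: (H2 M M' IM IM' b None erefl Logic.I Logic.I).
    exists (QQ M0 i2).1 => N.
    have [M [IM ltM]] := Hunb (maxn N (3 * M0.+1)).
    exists M; split; last by move: ltM; rewrite gtn_max => /andP[].
    have bM : bigr M0 M by rewrite /bigr; move: ltM; rewrite gtn_max => /andP[_]; lia.
    have [M2 [IM2 ltM2]] := Hunb (3 * M.+1).
    have b2 : bigr M M2 by rewrite /bigr; lia.
    have b02 : bigr M0 M2 by move: bM; rewrite /bigr; lia.
    split=> //; split; first by rewrite (E2 M0 M).
    by rewrite -(E2 M M2) // (E2 M0 M2).
  exists (PP M0 j).1 => N.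
  have [M [IM ltM]] := Hunb N.
  exists M; split=> //; split=> //.
  have [e1 e2] := Hoth j nj1 nj2 M M0.
  by rewrite e1 e2.
apply: (IH x (fun M => I M /\ (PP M j).1 = x /\ (QQ M j).1 = x)
   (fun M i => (PP M i).2 x) (fun M i => (QQ M i).2 x)).
- exact: Hunb'.
- move=> M [IM [ePx eQx]].
  by rewrite -(outcome_node ePx) -(outcome_node eQx); exact: Hleaf.
- move=> i ni1 ni2 M M'; have [e1 e2] := Hoth i ni1 ni2 M M'.
  by rewrite e1 e2.
- move=> M M' [IM [ePM eQM]] [IM' [ePM' eQM']] b u' ou' pu' qu'.
  exact: (H1 M M' IM IM' b (Some (existT _ x u')) ou' (conj ePM pu') (conj eQM' qu')).
- move=> M M' [IM [ePM eQM]] [IM' [ePM' eQM']] b u' ou' pu' qu'.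
  exact: (H2 M M' IM IM' b (Some (existT _ x u')) ou' (conj ePM' pu') (conj eQM qu')).
Qed.
End Tree.

Section Det.
Variables (R : realType) (n m : nat) (i1 i2 : 'I_n) (jA jB : 'I_m).
Hypothesis ni12 : i1 != i2.
Hypothesis nAB : jA != jB.
Implicit Types A : {set 'I_m}.

Definition sc (M : nat) : R := (M.+1)%:R.
Definition zval (M : nat) : valuation R m := fun j => if j == jB then 3 * sc M else 0.
Definition wval (M : nat) : valuation R m :=
  fun j => if j == jA then sc M else if j == jB then 3 * sc M else 0.
Definition vP (M : nat) : 'I_n -> valuation R m :=
  fun i => if i == i1 then zval M else if i == i2 then wval M else (fun _ => 0).
Definition vQ (M : nat) : 'I_n -> valuation R m :=
  fun i => if i == i1 then wval M else if i == i2 then zval M else (fun _ => 0).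

Lemma sc_gt0 M : 0 < sc M. Proof. by rewrite /sc ltr0n. Qed.

Lemma zval_ge0 M j : 0 <= zval M j.
Proof. by rewrite /zval; case: ifP => _ //; have := sc_gt0 M; lra. Qed.
Lemma wval_ge0 M j : 0 <= wval M j.
Proof. by rewrite /wval; case: ifP => _; [|case: ifP => _ //]; have := sc_gt0 M; lra. Qed.

Lemma vP1 M : vP M i1 = zval M. Proof. by rewrite /vP eqxx. Qed.
Lemma vP2 M : vP M i2 = wval M. Proof. by rewrite /vP eq_sym (negbTE ni12) eqxx. Qed.
Lemma vQ1 M : vQ M i1 = wval M. Proof. by rewrite /vQ eqxx. Qed.
Lemma vQ2 M : vQ M i2 = zval M. Proof. by rewrite /vQ eq_sym (negbTE ni12) eqxx. Qed.
Lemma vPo M i : i != i1 -> i != i2 -> vP M i = fun _ => 0.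
Proof. by move=> h1 h2; rewrite /vP (negbTE h1) (negbTE h2). Qed.
Lemma vQo M i : i != i1 -> i != i2 -> vQ M i = fun _ => 0.
Proof. by move=> h1 h2; rewrite /vQ (negbTE h1) (negbTE h2). Qed.

Lemma vP_ud M i : unit_demand (vP M i).
Proof. by move=> j; rewrite /vP; case: ifP => _; [|case: ifP => _]; rewrite ?zval_ge0 ?wval_ge0. Qed.
Lemma vQ_ud M i : unit_demand (vQ M i).
Proof. by move=> j; rewrite /vQ; case: ifP => _; [|case: ifP => _]; rewrite ?zval_ge0 ?wval_ge0. Qed.

Lemma zb_le M A : vbundle (zval M) A <= 3 * sc M.
Proof.
apply: vb_le; first by have := sc_gt0 M; lra.
by move=> j _; rewrite /zval; case: ifP => _; have := sc_gt0 M; lra.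
Qed.
Lemma zb_le0 M A : jB \notin A -> vbundle (zval M) A <= 0.
Proof.
move=> nB; apply: vb_le => // j jA'; rewrite /zval; case: ifP => // /eqP ej.
by move: nB; rewrite -ej jA'.
Qed.
Lemma wb_le M A : vbundle (wval M) A <= 3 * sc M.
Proof.
apply: vb_le; first by have := sc_gt0 M; lra.
by move=> j _; rewrite /wval; case: ifP => _; [|case: ifP => _]; have := sc_gt0 M; lra.
Qed.
Lemma wb_le1 M A : jB \notin A -> vbundle (wval M) A <= sc M.
Proof.
move=> nB; apply: vb_le; first by have := sc_gt0 M; lra.
move=> j jA'; rewrite /wval; case: ifP => _; first by [].
case: ifP => [/eqP ej|_]; first by move: nB; rewrite -ej jA'.
by have := sc_gt0 M; lra.
Qed.
Lemma wb_ge M A : jB \in A -> 3 * sc M <= vbundle (wval M) A.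
Proof.
move=> hB; apply: le_trans (vb_ge _ hB); rewrite /wval eqxx eq_sym (negbTE nAB) //.
Qed.

Lemma vb_zero A : vbundle (fun _ : 'I_m => 0 : R) A = 0.
Proof. by apply/le_anti; rewrite vb_le //= vb_ge0. Qed.

Lemma welfare2 (D : dmech R n m) v :
  (forall i, i != i1 -> i != i2 -> v i = fun _ => 0) ->
  welfare D v = vbundle (v i1) ((play D v).1 i1) + vbundle (v i2) ((play D v).1 i2).
Proof.
move=> H; rewrite /welfare (bigD1 i1) //= (bigD1 i2) /=; last by rewrite eq_sym ni12.
rewrite big1 ?addr0 // => i /andP[h2 h1]; rewrite H //; exact: vb_zero.
Qed.

Lemma feas12 (a : allocation n m) j : feasible a -> j \in a i1 -> j \notin a i2.
Proof.
move/forallP/(_ i1)/forallP/(_ i2); rewrite ni12 /= => dis hj.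
by rewrite (disjointFr dis hj).
Qed.

Lemma play_feas (D : dmech R n m) v : feasible_leaves D -> feasible (play D v).1.
Proof. move=> F; exact: (all_leaves_outcome F). Qed.

Lemma play_nnt (D : dmech R n m) v i : no_negative_transfers D -> 0 <= (play D v).2 i.
Proof. move=> F; exact: (all_leaves_outcome F). Qed.

Lemma WP_le (D : dmech R n m) M : feasible_leaves D -> welfare D (vP M) <= 4 * sc M.
Proof.
move=> F; rewrite welfare2; last exact: vPo.
rewrite vP1 vP2; have fe := play_feas (vP M) F.
case: (boolP (jB \in (play D (vP M)).1 i1)) => h.
  have := zb_le M ((play D (vP M)).1 i1); have := wb_le1 M (feas12 fe h). lra.
have := zb_le0 M h; have := wb_le M ((play D (vP M)).1 i2); have := sc_gt0 M; lra.
Qed.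

Lemma WQ_le (D : dmech R n m) M : feasible_leaves D -> welfare D (vQ M) <= 4 * sc M.
Proof.
move=> F; rewrite welfare2; last exact: vQo.
rewrite vQ1 vQ2; have fe := play_feas (vQ M) F.
case: (boolP (jB \in (play D (vQ M)).1 i1)) => h.
  have := wb_le M ((play D (vQ M)).1 i1); have := zb_le0 M (feas12 fe h); have := sc_gt0 M; lra.
have := wb_le1 M h; have := zb_le M ((play D (vQ M)).1 i2); lra.
Qed.

Lemma WP_big (D : dmech R n m) M : 3 * sc M < welfare D (vP M) -> jB \in (play D (vP M)).1 i1.
Proof.
rewrite welfare2; last exact: vPo.
rewrite vP1 vP2 => hW; apply/negPn/negP => h.
have := zb_le0 M h; have := wb_le M ((play D (vP M)).1 i2); lra.
Qed.

Lemma WQ_big (D : dmech R n m) M : 3 * sc M < welfare D (vQ M) -> jB \in (play D (vQ M)).1 i2.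
Proof.
rewrite welfare2; last exact: vQo.
rewrite vQ1 vQ2 => hW; apply/negPn/negP => h.
have := zb_le0 M h; have := wb_le M ((play D (vQ M)).1 i1); lra.
Qed.

Lemma feas21 (a : allocation n m) j : feasible a -> j \in a i2 -> j \notin a i1.
Proof.
move/forallP/(_ i2)/forallP/(_ i1); rewrite eq_sym ni12 /= => dis hj.
by rewrite (disjointFr dis hj).
Qed.

Lemma bigrR M M' : bigr M M' -> 3 * sc M < 2 * sc M'.
Proof.
rewrite /bigr /sc => h.
have : ((3 * M.+1)%:R < (2 * M'.+1)%:R :> R) by rewrite ltr_nat.
by rewrite !natrM.
Qed.

Lemma det_fail (D : dmech R n m) : feasible_leaves D -> OSP D -> indiv_rational D ->
  no_negative_transfers D ->
  exists N, forall M, (N <= M)%N -> welfare D (vP M) + welfare D (vQ M) <= 7 * sc M.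
Proof.
move=> F O IR NN.
apply: NNPP => hN.
pose I := fun M => 7 * sc M < welfare D (vP M) + welfare D (vQ M).
have Hun : forall N, exists M, I M /\ (N < M)%N.
  move=> N; apply: NNPP => h; apply: hN; exists N.+1 => M hM.
  rewrite leNgt; apply/negP => hlt; apply: h; exists M; split => //.
have big3 : forall M, I M -> 3 * sc M < welfare D (vP M) /\ 3 * sc M < welfare D (vQ M).
  move=> M IM; have := WP_le M F; have := WQ_le M F; rewrite /I in IM.
  by split; lra.
have ud : forall M, unit_demand (wval M) by move=> M j; exact: wval_ge0.
apply: (@tree_lemma R n m (tree D) i1 i2 I (fun M i => strat D i (vP M i))
          (fun M i => strat D i (vQ M i)) ni12 Hun).
- move=> M IM e; have [hP hQ] := big3 M IM.
  have h1 := WP_big hP; have h2 := feas21 (play_feas (vQ M) F) (WQ_big hQ).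
  by move: h1 h2; rewrite /play e => ->.
- by move=> i h1 h2 M M'; rewrite !vPo // !vQo.
- move=> M M' IM IM' b u ou pu qu df.
  have eU : upd (fun i => strat D i (vQ M' i)) i1 (strat D i1 (wval M')) = (fun i => strat D i (vQ M' i)).
    by apply: funext => i; rewrite /upd; case: eqP => [->|//]; rewrite vQ1.
  have := O i1 (wval M') (ud M') u ou (fun i => strat D i (vQ M' i)) (fun i => strat D i (vP M i)).
  rewrite eU => /(_ qu pu); rewrite vQ1 in df => /(_ df).
  rewrite /utility.
  have hB := WP_big (proj1 (big3 M IM)).
  have := wb_ge M' hB.
  have := IR (vP M) (vP_ud M) i1; rewrite /utility vP1.
  have := zb_le M ((play D (vP M)).1 i1).
  have hQ := feas21 (play_feas (vQ M') F) (WQ_big (proj2 (big3 M' IM'))).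
  have := wb_le1 M' hQ.
  have := play_nnt (vQ M') i1 NN.
  have := bigrR b.
  rewrite /play; lra.
- move=> M M' IM IM' b u ou pu qu df.
  have eU : upd (fun i => strat D i (vP M' i)) i2 (strat D i2 (wval M')) = (fun i => strat D i (vP M' i)).
    by apply: funext => i; rewrite /upd; case: eqP => [->|//]; rewrite vP2.
  have := O i2 (wval M') (ud M') u ou (fun i => strat D i (vP M' i)) (fun i => strat D i (vQ M i)).
  rewrite eU => /(_ pu qu); rewrite vP2 in df => /(_ df).
  rewrite /utility.
  have hB := WQ_big (proj2 (big3 M IM)).
  have := wb_ge M' hB.
  have := IR (vQ M) (vQ_ud M) i2; rewrite /utility vQ2.
  have := zb_le M ((play D (vQ M)).1 i2).
  have hP := feas12 (play_feas (vP M') F) (WP_big (proj1 (big3 M' IM'))).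
  have := wb_le1 M' hP.
  have := play_nnt (vP M') i2 NN.
  have := bigrR b.
  rewrite /play; lra.
Qed.

Lemma sum2 (f : 'I_n -> R) : (forall i, i != i1 -> i != i2 -> f i = 0) ->
  \sum_i f i = f i1 + f i2.
Proof.
move=> H; rewrite (bigD1 i1) //= (bigD1 i2) /=; last by rewrite eq_sym ni12.
by rewrite big1 ?addr0 // => i /andP[h2 h1]; rewrite H.
Qed.

Definition mkalloc (S1 S2 : {set 'I_m}) : {ffun 'I_n -> {set 'I_m}} :=
  [ffun i => if i == i1 then S1 else if i == i2 then S2 else finset.set0].

Lemma feas_mk (S1 S2 : {set 'I_m}) : [disjoint S1 & S2] -> feasible (mkalloc S1 S2).
Proof.
move=> d12.
have d0 : forall A : {set 'I_m}, [disjoint finset.set0 & A] by move=> A; apply/pred0P => x; rewrite /= inE.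
have d0' : forall A : {set 'I_m}, [disjoint A & finset.set0] by move=> A; rewrite disjoint_sym.
apply/forallP => i; apply/forallP => i'; apply/implyP => nii'; rewrite !ffunE.
case: (eqVneq i i1) => [ei|n1]; case: (eqVneq i' i1) => [ei'|n1'].
- by move: nii'; rewrite ei ei' eqxx.
- case: (eqVneq i' i2) => // _; by rewrite d12.
- case: (eqVneq i i2) => // _; by rewrite disjoint_sym.
- case: (eqVneq i i2) => [ei2|n2]; case: (eqVneq i' i2) => [ei2'|n2'] //.
  by move: nii'; rewrite ei2 ei2' eqxx.
Qed.

Lemma OPT_ge (v : 'I_n -> valuation R m) (a : {ffun 'I_n -> {set 'I_m}}) : feasible a -> \sum_i vbundle (v i) (a i) <= OPT v.
Proof. by move=> fa; rewrite /OPT (bigD1 a) //= le_max lexx. Qed.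

Lemma OPT_P M : 4 * sc M <= OPT (vP M).
Proof.
have dj : [disjoint [set jB] & [set jA]] by rewrite disjoints1 finset.in_set1 eq_sym.
apply: le_trans (OPT_ge (vP M) (feas_mk dj)).
rewrite sum2; last by move=> i h1 h2; rewrite vPo // vb_zero.
rewrite vP1 vP2 !ffunE eqxx eq_sym (negbTE ni12) eqxx !vb_set1 ?zval_ge0 ?wval_ge0 //.
by rewrite /zval /wval !eqxx; lra.
Qed.

Lemma OPT_Q M : 4 * sc M <= OPT (vQ M).
Proof.
have dj : [disjoint [set jA] & [set jB]] by rewrite disjoints1 finset.in_set1.
apply: le_trans (OPT_ge (vQ M) (feas_mk dj)).
rewrite sum2; last by move=> i h1 h2; rewrite vQo // vb_zero.
rewrite vQ1 vQ2 !ffunE eqxx eq_sym (negbTE ni12) eqxx !vb_set1 ?zval_ge0 ?wval_ge0 //.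
by rewrite /zval /wval !eqxx; lra.
Qed.

End Det.

Local Open Scope classical_set_scope.
Unset Implicit Arguments.

Theorem theorem4p7 (R : realType) (n m : nat) (d : measure_display)
  (Omega : measurableType d) (P : probability Omega R)
  (D : Omega -> dmech R n m) :
  (2 <= m)%N -> (2 <= n)%N ->
  rand_mech_ok D ->
  forall r : R, r < 8 / 7 ->
  exists v : 'I_n -> valuation R m,
    (forall i, unit_demand (v i)) /\
    (r%:E * expected_welfare P D v < (OPT v)%:E)%E.
Proof.
move=> hm hn [Hfeas [Hosp [Hir [Hnnt Hmeas]]]] r hr.
have h0n : (0 < n)%N by lia.
have h1n : (1 < n)%N by lia.
have h0m : (0 < m)%N by lia.
have h1m : (1 < m)%N by lia.
pose i1 : 'I_n := Ordinal h0n. pose i2 : 'I_n := Ordinal h1n.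
pose jA : 'I_m := Ordinal h0m. pose jB : 'I_m := Ordinal h1m.
have ni12 : i1 != i2 by [].
have nAB : jA != jB by [].
pose VP M := @vP R n m i1 i2 jA jB M.
pose VQ M := @vQ R n m i1 i2 jA jB M.
pose WP M w := welfare (D w) (VP M).
pose WQ M w := welfare (D w) (VQ M).
pose s M := @sc R M.
have Hdet : forall w, exists N, forall M, (N <= M)%N -> WP M w + WQ M w <= 7 * s M.
  by move=> w; exact: (det_fail ni12 nAB (Hfeas w) (Hosp w) (Hir w) (Hnnt w)).
have WP0 : forall M w, 0 <= WP M w.
  move=> M w; rewrite /WP /welfare; apply: sumr_ge0 => i _; apply: vb_ge0; exact: vP_ud.
have WQ0 : forall M w, 0 <= WQ M w.
  move=> M w; rewrite /WQ /welfare; apply: sumr_ge0 => i _; apply: vb_ge0; exact: vQ_ud.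
have WP4 : forall M w, WP M w <= 4 * s M by move=> M w; exact: WP_le.
have WQ4 : forall M w, WQ M w <= 4 * s M by move=> M w; exact: WQ_le.
pose F M := [set w | WP M w + WQ M w <= 7 * s M].
have mF : forall M, measurable (F M).
  move=> M.
  have := measurable_realfun.measurable_funD (Hmeas (VP M)) (Hmeas (VQ M)) measurableT (lebesgue_stieltjes_measure.measurable_itv `]-oo, 7 * s M]%R).
  rewrite setTI; congr measurable; apply/seteqP; split => w /=; rewrite in_itv /=; done.
pose G N := \bigcap_(k in [set k | (N <= k)%N]) F k.
have mG : forall N, measurable (G N).
  by move=> N; apply: bigcap_measurableType => k _; exact: mF.
have GF : forall N, G N `<=` F N by move=> N w; apply; rewrite /= leqnn.
have Gnd : nondecreasing_seq G.
  move=> a b hab; rewrite subsetEset => w Gw k /= hk; apply: Gw; rewrite /=; lia.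
have GT : \bigcup_N G N = setT.
  apply/seteqP; split => // w _; have [N HN] := Hdet w; exists N => // k hk; exact: HN.
have cv := @nondecreasing_cvg_mu _ _ _ P _ mG (bigcupT_measurable _ mG) Gnd.
have Hlarge : forall eta : R, eta < 1 -> exists N, (eta%:E < P (F N))%E.
  move=> eta he; apply: NNPP => hN.
  have : (P (\bigcup_N G N) <= eta%:E)%E.
    apply: (cvge_to_le cv); apply: nearW => N /=.
    rewrite leNgt; apply/negP => hlt; apply: hN; exists N.
    apply: (lt_le_trans hlt); apply: le_measure; rewrite ?inE //; exact: GF.
  by rewrite GT probability_setT lee_fin; lra.
have EW : forall M (v : 'I_n -> valuation R m), (forall i, unit_demand (v i)) ->
    (forall w, welfare (D w) v <= 4 * s M) ->
    exists x, expected_welfare P D v = x%:E /\ 0 <= x <= 4 * s M.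
  move=> M v ud hv.
  have W0 : forall w, 0 <= welfare (D w) v.
    by move=> w; rewrite /welfare; apply: sumr_ge0 => i _; apply: vb_ge0; exact: ud.
  set e := expected_welfare P D v.
  have e0 : (0 <= e)%E by apply: integral_ge0 => w _; rewrite lee_fin.
  have e4 : (e <= (4 * s M)%:E)%E.
    rewrite /e /expected_welfare.
    apply: (@le_trans _ _ (\int[P]_w (cst (4 * s M)%:E) w)%E).
      apply: ge0_le_integral => //.
      - by move=> w _; rewrite lee_fin.
      - by apply/measurable_realfun.measurable_EFinP; exact: Hmeas.
      - by move=> w _; rewrite lee_fin.
    rewrite integral_cst //; apply: (@le_trans _ _ ((4 * s M)%:E * 1)%E); last by rewrite mule1.
    apply: lee_wpmul2l; first by rewrite lee_fin; have := sc_gt0 R M; rewrite /s /=; lra.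
    exact: probability_le1.
  have fe : e \is a fin_num by rewrite ge0_fin_numE // (le_lt_trans e4) // ltey.
  exists (fine e); split; first by rewrite fineK.
  by rewrite -lee_fin -lee_fin fineK // e0 e4.
have Hsum : forall M xP xQ pF, expected_welfare P D (VP M) = xP%:E ->
    expected_welfare P D (VQ M) = xQ%:E -> P (F M) = pF%:E ->
    xP + xQ + s M * pF <= 8 * s M.
  move=> M xP xQ pF eP eQ eF.
  have sM : 0 < s M by exact: sc_gt0.
  have I0 : forall w, 0 <= s M * \1_(F M) w by move=> w; rewrite indicE mulr_ge0 // ltW.
  have key : (\int[P]_w ((WP M w)%:E + (WQ M w)%:E + (s M * \1_(F M) w)%:E) <= (8 * s M)%:E)%E.
    apply: (@le_trans _ _ (\int[P]_w (cst (8 * s M)%:E) w)%E).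
      apply: ge0_le_integral => //.
      - by move=> w _; rewrite -!EFinD lee_fin; have := WP0 M w; have := WQ0 M w; have := I0 w; lra.
      - apply: emeasurable_funD; first by apply: emeasurable_funD; apply/measurable_realfun.measurable_EFinP; exact: Hmeas.
        apply/measurable_realfun.measurable_EFinP.
        apply: measurable_realfun.measurable_funM; first exact: measurable_cst.
        exact: measurable_realfun.measurable_indic.
      - move=> w _ /=; rewrite -!EFinD lee_fin.
        have := WP4 M w; have := WQ4 M w; rewrite indicE.
        case: (boolP (w \in F M)) => [/set_mem|_] /=.
          by rewrite /F /= => h; rewrite mulr1; lra.
        by rewrite mulr0; lra.
    rewrite integral_cst //; apply: (@le_trans _ _ ((8 * s M)%:E * 1)%E); last by rewrite mule1.
    apply: lee_wpmul2l; first by rewrite lee_fin; lra.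
    exact: probability_le1.
  have mP : forall w, True by [].
  have E1 : (\int[P]_w ((WP M w)%:E + (WQ M w)%:E + (s M * \1_(F M) w)%:E) =
      \int[P]_w ((WP M w)%:E + (WQ M w)%:E) + \int[P]_w ((s M * \1_(F M) w)%:E))%E.
    apply: ge0_integralD => //.
    - by move=> w _; rewrite -EFinD lee_fin; have := WP0 M w; have := WQ0 M w; lra.
    - by apply: emeasurable_funD; apply/measurable_realfun.measurable_EFinP; exact: Hmeas.
    - by move=> w _; rewrite lee_fin.
    - apply/measurable_realfun.measurable_EFinP.
      apply: measurable_realfun.measurable_funM; first exact: measurable_cst.
      exact: measurable_realfun.measurable_indic.
  have E2 : (\int[P]_w ((WP M w)%:E + (WQ M w)%:E) =
      \int[P]_w ((WP M w)%:E) + \int[P]_w ((WQ M w)%:E))%E.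
    apply: ge0_integralD => //.
    - by move=> w _; rewrite lee_fin.
    - by apply/measurable_realfun.measurable_EFinP; exact: Hmeas.
    - by move=> w _; rewrite lee_fin.
    - by apply/measurable_realfun.measurable_EFinP; exact: Hmeas.
  rewrite E1 E2 in key.
  have E3 : (\int[P]_w ((s M * \1_(F M) w)%:E) = (s M)%:E * P (F M))%E.
    have sM2 := sM; move: (s M) sM2 (F M) (mF M) => k k0 A mA.
    have h4 : k < 0 -> False by move=> h; lra.
    have := @integralZl_indic _ Omega R P setT measurableT (fun _ => A) k (fun h => False_ind _ (h4 h)) mA.
    by move=> ->; rewrite integral_indic // setIT.
  rewrite E3 in key.
  move: key; rewrite -[X in (X + _ + _)%E]/(expected_welfare P D (VP M)).
  rewrite -[X in (_ + X + _)%E]/(expected_welfare P D (VQ M)).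
  by rewrite eP eQ eF -EFinM -!EFinD lee_fin.
have udP : forall M i, unit_demand (VP M i) by move=> M i; exact: vP_ud.
have udQ : forall M i, unit_demand (VQ M i) by move=> M i; exact: vQ_ud.
have OP : forall M, 4 * s M <= OPT (VP M) by move=> M; exact: OPT_P.
have OQ : forall M, 4 * s M <= OPT (VQ M) by move=> M; exact: OPT_Q.
case: (lerP r 0) => hr0.
  have [x [ex /andP[x0 x4]]] := EW 0%N (VP 0%N) (udP 0%N) (WP4 0%N).
  exists (VP 0%N); split; first exact: udP.
  rewrite ex -EFinM lte_fin.
  have := OP 0%N; have := sc_gt0 R 0%N; rewrite /s /= => h1 h2.
  have : r * x <= 0 by rewrite mulr_le0_ge0.
  lra.
pose t := 8 / r.
have hrt : r * t = 8 by rewrite /t mulrCA divff ?mulr1 // gt_eqF.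
have ht : 7 < t.
  have h7 : 7 * r < 8 by move: hr; rewrite ltr_pdivlMr //; lra.
  rewrite -(ltr_pM2l hr0) hrt; lra.
have [N HN] := Hlarge (8 - t) ltac:(lra).
have [xP [eP /andP[xP0 xP4]]] := EW N (VP N) (udP N) (WP4 N).
have [xQ [eQ /andP[xQ0 xQ4]]] := EW N (VQ N) (udQ N) (WQ4 N).
have pF0 : (0 <= P (F N))%E by exact: measure_ge0.
have pF1 : (P (F N) <= 1)%E by exact: probability_le1.
have fF : P (F N) \is a fin_num by rewrite ge0_fin_numE // (le_lt_trans pF1) // ltey.
set pF := fine (P (F N)).
have eF : P (F N) = pF%:E by rewrite /pF fineK.
have hS := Hsum N xP xQ pF eP eQ eF.
have hp : 8 - t < pF by rewrite -lte_fin -eF.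
have sN : 0 < s N by exact: sc_gt0.
have h1 : xP + xQ < s N * t.
  have : s N * (8 - t) < s N * pF by rewrite ltr_pM2l.
  lra.
have h2 : r * (xP + xQ) < r * (s N * t) by rewrite ltr_pM2l.
have h3 : r * (s N * t) = 8 * s N by rewrite mulrCA hrt mulrC.
have := OP N; have := OQ N => hQ hP.
case: (ltP (r * xP) (OPT (VP N))) => hPr.
  exists (VP N); split; first exact: udP.
  by rewrite eP -EFinM lte_fin.
exists (VQ N); split; first exact: udQ.
rewrite eQ -EFinM lte_fin.
rewrite ltNge; apply/negP => hQr.
have : r * (xP + xQ) >= 8 * s N by rewrite mulrDr; lra.
lra.
Qed.
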